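(* Let $A\subseteq B\subseteq\mathbb{N}$. If $B\in\mathcal{D}$, then there exists $C\in\mathcal{D}$ such that $d(C)=\overline{\overline{d}}(A)$ and $A\subseteq C\subseteq B$. If $A\in\mathcal{D}$, then there exists $C\in\mathcal{D}$ such that $d(C)=\underline{\underline{d}}(B)$ and $A\subseteq C\subseteq B$.
   Context: $\mathbb{N}=\{1,2,3,\dots\}$. For $A\subseteq\mathbb{N}$ let $A(n)=|A\cap[1,n]|$. Let $\mathcal{D}$ be the collection of all $A\subseteq\mathbb{N}$ for which the asymptotic density $d(A)=\lim_{n\to\infty}\frac{A(n)}{n}$ exists. Define $\underline{\underline{d}}(A)=\sup\{d(B);\ B\subseteq A,\ B\in\mathcal{D}\}$ and $\overline{\overline{d}}(A)=\inf\{d(C);\ C\supseteq A,\ C\in\mathcal{D}\}$. *)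

(* Defs.v *)
From HB Require Import structures.
From mathcomp Require Import all_boot all_order all_algebra.
From mathcomp Require Import all_classical all_reals all_analysis.
Set Implicit Arguments. Unset Strict Implicit. Unset Printing Implicit Defensive.
Import Order.TTheory GRing.Theory Num.Theory.
Import numFieldNormedType.Exports.
Local Open Scope classical_set_scope.
Local Open Scope ring_scope.

(* Subsets of the positive integers are represented as [set nat];
   the element 0 never contributes to the counting function. *)

Definition cntR (R : realType) (A : set nat) (n : nat) : R :=
  \sum_(1 <= i < n.+1) (\1_A i : R).

Definition ratio (R : realType) (A : set nat) (n : nat) : R :=
  cntR R A n / n%:R.

Definition hasdens (R : realType) (A : set nat) : Prop :=
  cvgn (ratio R A).

Definition dens (R : realType) (A : set nat) : R := limn (ratio R A).

Definition ldens (R : realType) (A : set nat) : R :=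
  sup [set x : R | exists B : set nat, B `<=` A /\ hasdens R B /\ dens R B = x].

Definition udens (R : realType) (A : set nat) : R :=
  inf [set x : R | exists C : set nat, A `<=` C /\ hasdens R C /\ dens R C = x].

(* Main.v *)
Require Import Defs.
From HB Require Import structures.
From mathcomp Require Import all_boot all_order all_algebra.
From mathcomp Require Import all_classical all_reals all_analysis.
From mathcomp Require Import lra.
Import Defs.
Import Order.TTheory GRing.Theory Num.Theory.
Import numFieldNormedType.Exports.
Local Open Scope classical_set_scope.
Local Open Scope ring_scope.

Lemma cntR0 (R : realType) (A : set nat) : cntR R A 0 = 0.
Proof. by rewrite /cntR big_geq. Qed.

Lemma cntRS (R : realType) (A : set nat) n : cntR R A n.+1 = cntR R A n + \1_A n.+1.
Proof. by rewrite /cntR big_nat_recr. Qed.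

Lemma indicT' (R : realType) (A : set nat) i : A i -> (\1_A i : R) = 1.
Proof. by move=> h; rewrite indicE mem_set. Qed.

Lemma indicF' (R : realType) (A : set nat) i : ~ A i -> (\1_A i : R) = 0.
Proof. by move=> h; rewrite indicE memNset. Qed.

Lemma indic01 (R : realType) (A : set nat) i : 0 <= (\1_A i : R) <= 1.
Proof.
case: (pselect (A i)) => h; [rewrite indicT' // | rewrite indicF' //]; lra.
Qed.

Lemma cntR_ge0 (R : realType) (A : set nat) n : 0 <= cntR R A n.
Proof.
elim: n => [|n IH]; first by rewrite cntR0.
rewrite cntRS; have := indic01 R A n.+1; lra.
Qed.

Lemma cntR_le (R : realType) (A : set nat) n : cntR R A n <= n%:R.
Proof.
elim: n => [|n IH]; first by rewrite cntR0.
rewrite cntRS -natr1; have := indic01 R A n.+1; lra.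
Qed.

Lemma cntR_setC (R : realType) (A : set nat) n : cntR R (~` A) n = n%:R - cntR R A n.
Proof.
elim: n => [|n IH]; first by rewrite !cntR0 subr0.
rewrite !cntRS IH -natr1.
case: (pselect (A n.+1)) => h.
  have e1 : (\1_(~` A) n.+1 : R) = 0 by apply: indicF' => /(_ h).
  rewrite e1 (indicT' R A n.+1 h); lra.
have e1 : (\1_(~` A) n.+1 : R) = 1 by apply: indicT'.
rewrite e1 (indicF' R A n.+1 h); lra.
Qed.

Lemma ratio_ge0 (R : realType) (A : set nat) n : 0 <= ratio R A n.
Proof. by rewrite /ratio divr_ge0 // cntR_ge0. Qed.

Lemma ratio_le1 (R : realType) (A : set nat) n : ratio R A n <= 1.
Proof.
rewrite /ratio; case: n => [|n]; first by rewrite cntR0 mul0r.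
by rewrite ler_pdivrMr ?ltr0Sn // mul1r cntR_le.
Qed.

Lemma ratio_setC (R : realType) (A : set nat) n : (0 < n)%N ->
  ratio R (~` A) n = 1 - ratio R A n.
Proof.
move=> n0; rewrite /ratio cntR_setC mulrBl divff //.
by rewrite pnatr_eq0 -lt0n.
Qed.

Lemma cvg_setC (R : realType) (A : set nat) (x : R) :
  ratio R A @ \oo --> x -> ratio R (~` A) @ \oo --> 1 - x.
Proof.
move/cvgrPdist_le => h; apply/cvgrPdist_le => e e0.
have [N _ HN] := h e e0.
exists N.+1 => // n /= hn.
rewrite ratio_setC; last by apply: leq_ltn_trans hn.
have -> : 1 - x - (1 - ratio R A n) = - (x - ratio R A n) by lra.
rewrite normrN; apply: HN => /=; exact: ltnW.
Qed.

Lemma dens_bounds (R : realType) (A : set nat) : hasdens R A -> 0 <= dens R A <= 1.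
Proof.
move=> h; apply/andP; split.
  apply: limr_ge => //; apply: nearW => n; exact: ratio_ge0.
apply: limr_le => //; apply: nearW => n; exact: ratio_le1.
Qed.

Lemma hasdens_setC (R : realType) (A : set nat) : hasdens R A ->
  hasdens R (~` A) /\ dens R (~` A) = 1 - dens R A.
Proof.
move=> h; have h' := cvg_setC _ _ _ (h : ratio R A @ \oo --> dens R A).
split; first exact: cvgP h'.
exact: cvg_lim h'.
Qed.

Fixpoint gF (R : realType) (A B : set nat) (u : R) (n : nat) : R :=
  if n is k.+1 then
    gF R A B u k + (if `[< A k.+1 \/ (B k.+1 /\ gF R A B u k < u * k.+1%:R) >] then 1 else 0)
  else 0.

Definition FF (R : realType) (A B : set nat) (u : R) : set nat :=
  fun k => A k \/ (B k /\ gF R A B u k.-1 < u * k%:R).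

Lemma cntFF (R : realType) (A B : set nat) (u : R) n :
  cntR R (FF R A B u) n = gF R A B u n.
Proof.
elim: n => [|n IH]; first by rewrite cntR0.
rewrite cntRS IH /=.
case: (pselect (A n.+1 \/ (B n.+1 /\ gF R A B u n < u * n.+1%:R))) => h.
  by rewrite asboolT // indicT'.
by rewrite asboolF // indicF'.
Qed.

Lemma gF_ub (R : realType) (A B C : set nat) (u lam K : R) : A `<=` C -> 0 <= lam -> 0 <= K ->
  (forall m, u * m%:R + 1 - cntR R C m <= lam * m%:R + K) ->
  forall n, gF R A B u n <= cntR R C n + lam * n%:R + K.
Proof.
move=> AC l0 K0 h; elim=> [|n IH]; first by rewrite /= cntR0 mulr0 !add0r.
have hC : cntR R C n <= cntR R C n.+1 by rewrite cntRS lerDl; case/andP: (indic01 R C n.+1).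
have hlam : lam * n%:R + lam = lam * n.+1%:R by rewrite -natr1 mulrDr mulr1.
rewrite /=.
case: (pselect (A n.+1 \/ (B n.+1 /\ gF R A B u n < u * n.+1%:R))) => [hF|hF]; last first.
  rewrite asboolF // addr0; lra.
rewrite asboolT //.
case: hF => [An|[Bn ltn]].
  have : cntR R C n.+1 = cntR R C n + 1 by rewrite cntRS indicT' //; exact: AC.
  lra.
have := h n.+1; lra.
Qed.

Lemma gF_lb (R : realType) (A B : set nat) (u lam L : R) : A `<=` B -> 0 <= lam -> 0 <= L ->
  (forall m, cntR R B m - u * m%:R <= lam * m%:R + L) ->
  forall n, cntR R B n - lam * n%:R - L <= gF R A B u n.
Proof.
move=> AB l0 L0 h; elim=> [|n IH]; first by rewrite /= cntR0 mulr0; lra.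
have hlam : lam * n%:R + lam = lam * n.+1%:R by rewrite -natr1 mulrDr mulr1.
have hB := indic01 R B n.+1.
rewrite /= cntRS.
case: (pselect (A n.+1 \/ (B n.+1 /\ gF R A B u n < u * n.+1%:R))) => [hF|hF].
  rewrite asboolT //; lra.
rewrite asboolF // addr0.
case: (pselect (B n.+1)) => Bn.
  have : ~ (gF R A B u n < u * n.+1%:R) by move=> lt; apply: hF; right.
  move/negP; rewrite -leNgt => le.
  have := h n.+1; rewrite cntRS; lra.
rewrite indicF' //; lra.
Qed.

Lemma ratio_bounds (R : realType) (E : set nat) (x eps : R) n : (0 < n)%N ->
  `|x - ratio R E n| <= eps ->
  (x - eps) * n%:R <= cntR R E n /\ cntR R E n <= (x + eps) * n%:R.
Proof.
move=> n0; have hn : 0 < n%:R :> R by rewrite ltr0n.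
have e : cntR R E n = ratio R E n * n%:R by rewrite /ratio divfK // gt_eqF.
rewrite ler_distl => /andP[h1 h2].
rewrite e; split; apply: (ler_wpM2r (ltW hn)); lra.
Qed.

Lemma ratio_from_bounds (R : realType) (E : set nat) (x eps : R) n : (0 < n)%N ->
  (x - eps) * n%:R <= cntR R E n -> cntR R E n <= (x + eps) * n%:R ->
  `|x - ratio R E n| <= eps.
Proof.
move=> n0 h1 h2; have hn : 0 < n%:R :> R by rewrite ltr0n.
have h1' : x - eps <= ratio R E n by rewrite /ratio ler_pdivlMr.
have h2' : ratio R E n <= x + eps by rewrite /ratio ler_pdivrMr.
rewrite ler_distl; apply/andP; split; lra.
Qed.

Lemma core (R : realType) (A B : set nat) (u : R) : A `<=` B -> hasdens R B ->
  (forall C, A `<=` C -> hasdens R C -> u <= dens R C) ->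
  (forall e, 0 < e -> exists C, A `<=` C /\ hasdens R C /\ dens R C < u + e) ->
  ratio R (FF R A B u) @ \oo --> u.
Proof.
move=> AB hB lb ap.
apply/cvgrPdist_le => e e0.
pose eps := e / 4.
have eps0 : 0 < eps by rewrite divr_gt0.
have e4 : e = eps * 4 by rewrite /eps divfK // pnatr_eq0.
have [C [AC [hC dC]]] := ap eps eps0.
have uC := lb C AC hC.
move: (hC : ratio R C @ \oo --> dens R C) => /cvgrPdist_le /(_ eps eps0) [N1 _ HN1].
set c := dens R C in dC uC HN1.
pose N0 := maxn N1 1.
pose K := `|u| * N0%:R + 1.
have K1 : 1 <= K by rewrite /K lerDr mulr_ge0.
have hK : forall m, u * m%:R + 1 - cntR R C m <= eps * m%:R + K.
  move=> m; have em : 0 <= eps * m%:R by rewrite mulr_ge0 // ltW.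
  case: (leqP N0 m) => hm.
    have /andP[hm1 hm2] : (N1 <= m)%N && (0 < m)%N by rewrite /N0 geq_max in hm.
    have [lo _] := ratio_bounds _ _ _ _ _ hm2 (HN1 m hm1).
    have : u * m%:R <= c * m%:R by apply: ler_wpM2r.
    rewrite mulrBl in lo; lra.
  have : u * m%:R <= `|u| * N0%:R.
    apply: le_trans (ler_wpM2r (ler0n _ _) (ler_norm u)) (ler_wpM2l (normr_ge0 u) _).
    by rewrite ler_nat ltnW.
  have := cntR_ge0 R C m; rewrite /K; lra.
have ub := gF_ub R A B C u eps K AC (ltW eps0) (le_trans ler01 K1) hK.
move: (hB : ratio R B @ \oo --> dens R B) => /cvgrPdist_le /(_ eps eps0) [M1 _ HM1].
have uB := lb B AB hB.
set b := dens R B in uB HM1.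
pose M0 := maxn M1 1.
pose L := (1 + `|u|) * M0%:R.
have L0 : 0 <= L by rewrite /L mulr_ge0 // addr_ge0.
have lam0 : 0 <= b - u + eps by lra.
have hL : forall m, cntR R B m - u * m%:R <= (b - u + eps) * m%:R + L.
  move=> m; case: (leqP M0 m) => hm.
    have /andP[hm1 hm2] : (M1 <= m)%N && (0 < m)%N by rewrite /M0 geq_max in hm.
    have [_ hi] := ratio_bounds _ _ _ _ _ hm2 (HM1 m hm1).
    rewrite mulrDl in hi; rewrite !mulrDl mulNr; lra.
  have hu : - u <= `|u| by rewrite -normrN ler_norm.
  have h1 : - (u * m%:R) <= `|u| * m%:R by rewrite -mulNr; apply: ler_wpM2r.
  have h2 : `|u| * m%:R <= `|u| * M0%:R by apply: ler_wpM2l => //; rewrite ler_nat ltnW.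
  have h3 : 0 <= (b - u + eps) * m%:R by rewrite mulr_ge0.
  have h4 : m%:R <= M0%:R :> R by rewrite ler_nat ltnW.
  have hLe : L = M0%:R + `|u| * M0%:R by rewrite /L mulrDl mul1r.
  have := cntR_le R B m; lra.
have lbF := gF_lb R A B u (b - u + eps) L AB lam0 L0 hL.
have KL0 : 0 <= (K + L) / eps by apply: divr_ge0; [apply: addr_ge0 => //; exact: le_trans ler01 K1 | exact: ltW].
have hN2 := archi_boundP KL0.
exists (maxn (maxn N0 M0) (Num.Def.archi_bound ((K + L) / eps))) => // n /=.
rewrite !geq_max => /andP[/andP[hn0 hm0] hn2].
case/andP: hn0 => hn1 n0.
case/andP: hm0 => hm1 _.
have [loC hiC] := ratio_bounds _ _ _ _ _ n0 (HN1 n hn1).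
have [loB hiB] := ratio_bounds _ _ _ _ _ n0 (HM1 n hm1).
have KL : K + L <= eps * n%:R.
  have : (K + L) / eps < n%:R.
    by apply: lt_le_trans hN2 _; rewrite ler_nat.
  rewrite ltr_pdivrMr // mulrC => /ltW //.
have en : e * n%:R = eps * n%:R * 4 by rewrite e4 mulrAC.
have cn : c * n%:R <= (u + eps) * n%:R by apply: ler_wpM2r => //; apply: ltW.
have ubn := ub n.
have lbn := lbF n.
apply: (ratio_from_bounds _ _ _ _ _ n0); rewrite cntFF.
  rewrite mulrBl en; rewrite !mulrDl mulNr in lbn; rewrite mulrBl in loB; lra.
rewrite mulrDl en; rewrite mulrDl in hiC cn; lra.
Qed.

Theorem proposition3p12 (R : realType) (A B : set nat) :
  A `<=` B ->
  (hasdens R B ->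
     exists C : set nat, hasdens R C /\ dens R C = udens R A /\ A `<=` C /\ C `<=` B) /\
  (hasdens R A ->
     exists C : set nat, hasdens R C /\ dens R C = ldens R B /\ A `<=` C /\ C `<=` B).
Proof.
move=> AB; split => [hB|hA].
  set S := [set x : R | exists C : set nat, A `<=` C /\ hasdens R C /\ dens R C = x].
  have Slb : has_lbound S.
    exists 0 => x [C [_ [hC <-]]]; by case/andP: (dens_bounds R C hC).
  have Sne : S !=set0 by exists (dens R B); exists B.
  have H := core R A B (udens R A) AB hB
    (fun C AC hC => ge_inf Slb (ex_intro _ C (conj AC (conj hC erefl))))
    (fun e e0 => match inf_adherent e0 (conj Sne Slb) with
       ex_intro2 x (ex_intro C (conj AC (conj hC dC))) hx =>
         ex_intro _ C (conj AC (conj hC (eq_ind_r (fun y => y < _) hx dC))) end).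
  exists (FF R A B (udens R A)); split; first exact: cvgP H.
  split; first exact: cvg_lim H.
  split; first by move=> x Ax; left.
  by move=> x [Ax|[Bx _]]; [exact: AB|].
set S := [set x : R | exists E : set nat, E `<=` B /\ hasdens R E /\ dens R E = x].
have Sub : has_ubound S.
  exists 1 => x [E [_ [hE <-]]]; by case/andP: (dens_bounds R E hE).
have Sne : S !=set0 by exists (dens R A); exists A.
have AB' : ~` B `<=` ~` A by move=> x nBx Ax; exact: nBx (AB x Ax).
have [hA' dA'] := hasdens_setC R A hA.
have lb : forall C, ~` B `<=` C -> hasdens R C -> 1 - ldens R B <= dens R C.
  move=> C BC hC; have [hC' dC'] := hasdens_setC R C hC.
  have CB : ~` C `<=` B.
    move=> x nCx; apply: contra_notP nCx => nBx; exact: BC.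
  have : dens R (~` C) <= ldens R B by apply: (ub_le_sup Sub); exists (~` C).
  lra.
have ap : forall e, 0 < e -> exists C, ~` B `<=` C /\ hasdens R C /\ dens R C < 1 - ldens R B + e.
  move=> e e0; have [x [E [EB [hE dE]]] hx] := sup_adherent e0 (conj Sne Sub).
  have [hE' dE'] := hasdens_setC R E hE.
  exists (~` E); split; first by move=> y nBy Ey; exact: nBy (EB y Ey).
  have eS : ldens R B = sup S by [].
  split => //; rewrite dE' dE; lra.
have H := core R (~` B) (~` A) (1 - ldens R B) AB' hA' lb ap.
have H' := cvg_setC _ _ _ H.
exists (~` FF R (~` B) (~` A) (1 - ldens R B)); split; first exact: cvgP H'.
split.
  have eL : dens R (~` FF R (~` B) (~` A) (1 - ldens R B)) = 1 - (1 - ldens R B) by exact: cvg_lim H'.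
  rewrite eL; lra.
split.
  move=> x Ax [nBx|[nAx _]]; last exact: nAx.
  exact: nBx (AB x Ax).
move=> x nFx; apply: contra_notP nFx => nBx; by left.
Qed.
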